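(* Let $\mathbb F$ be a field of characteristic $0$ and $A=\mathbb F[x,y,u,v]/\langle(1-x^2)(1-y^2)-(u^2+v^2)\rangle$. Let $$N=\begin{pmatrix}-u&v&1-x^2&0\\-v&-u&0&1-x^2\\1-y^2&0&-u&-v\\0&1-y^2&v&-u\end{pmatrix},\qquad M=\begin{pmatrix}u&v&1-x^2&0\\-v&u&0&1-x^2\\1-y^2&0&u&-v\\0&1-y^2&v&u\end{pmatrix},$$ viewed as $A$-linear maps $A^4\to A^4$. Then the kernel of $N$ equals the $A$-submodule of $A^4$ generated by the columns of $M$. *)

(* Defs.v *)
From HB Require Import structures.
From mathcomp Require Import all_boot all_order all_algebra.
Set Implicit Arguments. Unset Strict Implicit. Unset Printing Implicit Defensive.
Import GRing.Theory.
Local Open Scope ring_scope.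

(* F[x,y,u,v] as iterated univariate polynomials:
   x is the outermost variable, v the innermost. *)
Definition P4 (F : fieldType) := {poly {poly {poly {poly F}}}}.

Definition vx (F : fieldType) : P4 F := 'X.
Definition vy (F : fieldType) : P4 F := ('X)%:P.
Definition vu (F : fieldType) : P4 F := ('X)%:P%:P.
Definition vv (F : fieldType) : P4 F := ('X)%:P%:P%:P.

Definition relA (F : fieldType) : P4 F :=
  (1 - vx F ^+ 2) * (1 - vy F ^+ 2) - (vu F ^+ 2 + vv F ^+ 2).

Definition Nmat (F : fieldType) : 'M[P4 F]_4 :=
  let x := vx F in let y := vy F in let u := vu F in let v := vv F in
  \matrix_(i < 4, j < 4)
    nth 0 (nth [::] [:: [:: -u; v; 1 - x^+2; 0];
                        [:: -v; -u; 0; 1 - x^+2];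
                        [:: 1 - y^+2; 0; -u; -v];
                        [:: 0; 1 - y^+2; v; -u]] i) j.

Definition Mmat (F : fieldType) : 'M[P4 F]_4 :=
  let x := vx F in let y := vy F in let u := vu F in let v := vv F in
  \matrix_(i < 4, j < 4)
    nth 0 (nth [::] [:: [:: u; v; 1 - x^+2; 0];
                        [:: -v; u; 0; 1 - x^+2];
                        [:: 1 - y^+2; 0; u; -v];
                        [:: 0; 1 - y^+2; v; u]] i) j.

(* Working in A^4 = (F[x,y,u,v]/<relA>)^4 via representatives:
   the class of w lies in ker N  iff  N w is in relA * P^4;
   the class of w lies in the A-span of the columns of M
   iff w = M c + relA * q for some c, q in P^4. *)
Definition in_kerA (F : fieldType) (w : 'cV[P4 F]_4) : Prop :=
  exists q : 'cV[P4 F]_4, Nmat F *m w = relA F *: q.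

Definition in_colspanA (F : fieldType) (w : 'cV[P4 F]_4) : Prop :=
  exists c q : 'cV[P4 F]_4, w = Mmat F *m c + relA F *: q.

(* Main.v *)
Require Import Defs.
From HB Require Import structures.
From mathcomp Require Import all_boot all_order all_algebra.
From mathcomp Require Import ring.
Set Implicit Arguments. Unset Strict Implicit.
Import GRing.Theory.
Local Open Scope ring_scope.

Definition Ng (R : comRingType) (a b u v : R) : 'M[R]_4 :=
  \matrix_(i < 4, j < 4)
    nth 0 (nth [::] [:: [:: -u; v; a; 0];
                        [:: -v; -u; 0; a];
                        [:: b; 0; -u; -v];
                        [:: 0; b; v; -u]] i) j.
Definition Mg (R : comRingType) (a b u v : R) : 'M[R]_4 :=
  \matrix_(i < 4, j < 4)
    nth 0 (nth [::] [:: [:: u; v; a; 0];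
                        [:: -v; u; 0; a];
                        [:: b; 0; u; -v];
                        [:: 0; b; v; u]] i) j.

Lemma MNg (R : comRingType) (a b u v : R) :
  Mg a b u v *m Ng a b u v = (a * b - (u ^+ 2 + v ^+ 2))%:M.
Proof.
apply/matrixP => i j; rewrite !mxE.
case: i => [[|[|[|[|i]]]] Hi] //; case: j => [[|[|[|[|j]]]] Hj] //;
rewrite !big_ord_recl big_ord0 !mxE /=; ring.
Qed.

Lemma NMg (R : comRingType) (a b u v : R) :
  Ng a b u v *m Mg a b u v = (a * b - (u ^+ 2 + v ^+ 2))%:M.
Proof.
apply/matrixP => i j; rewrite !mxE.
case: i => [[|[|[|[|i]]]] Hi] //; case: j => [[|[|[|[|j]]]] Hj] //;
rewrite !big_ord_recl big_ord0 !mxE /=; ring.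
Qed.

Lemma MN (F : fieldType) : Mmat F *m Nmat F = (relA F)%:M.
Proof. exact: MNg. Qed.
Lemma NM (F : fieldType) : Nmat F *m Mmat F = (relA F)%:M.
Proof. exact: NMg. Qed.

Lemma scale_inj (F : fieldType) (a : P4 F) (A B : 'cV[P4 F]_4) :
  a != 0 -> a *: A = a *: B -> A = B.
Proof.
move=> a0 /matrixP H; apply/matrixP => i j.
move: (H i j); rewrite !mxE; exact: mulfI.
Qed.

Lemma relA_neq0 (F : fieldType) : relA F != 0.
Proof.
apply/negP => /eqP H.
have H1 : (relA F).[0].[0].[0].[0] = 0 by rewrite H !horner0.
rewrite /relA /vx /vy /vu /vv in H1.
rewrite !(hornerD, hornerN, hornerM, hornerC, hornerX, hornerXn, horner_exp) in H1.
rewrite !mul0r !subr0 mulr1 addr0 in H1.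
by move: H1; rewrite subr0 => /eqP; rewrite oner_eq0.
Qed.

Theorem mainTheorem19 (F : fieldType) (charF0 : [pchar F] =i pred0)
  (w : 'cV[P4 F]_4) :
  in_kerA w <-> in_colspanA w.
Proof.
split.
- case=> q Hq; exists q, 0; rewrite scaler0 addr0.
  apply: (@scale_inj F (relA F)); first exact: relA_neq0.
  by rewrite scalemxAr -Hq mulmxA MN mul_scalar_mx.
- case=> c [q ->]; exists (c + Nmat F *m q).
  by rewrite mulmxDr mulmxA NM mul_scalar_mx -scalemxAr scalerDr.
Qed.
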